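(* Let $(M,+)$ be an Abelian semigroup, $\mathcal A_0=\{\theta\in\mathbb N_0^n:\theta\le1\}$, $h:\mathcal A_0\to M$ and $\alpha\in\mathcal A_0$. If $1-\alpha$ is even, then $$\sum_{\mathrm{ev}\,\theta\le\alpha}h(1-\alpha+\theta)+\sum_{\mathrm{od}\,\beta\le1-\alpha}\ \sum_{\mathrm{ev}\,\theta\le\alpha+\beta}h(\theta)=\sum_{\mathrm{ev}\,\beta\le1-\alpha}\ \sum_{\mathrm{ev}\,\theta\le\alpha+\beta}h(\theta),$$ $$\sum_{\mathrm{od}\,\theta\le\alpha}h(1-\alpha+\theta)+\sum_{\mathrm{od}\,\beta\le1-\alpha}\ \sum_{\mathrm{od}\,\theta\le\alpha+\beta}h(\theta)=\sum_{\mathrm{ev}\,\beta\le1-\alpha}\ \sum_{\mathrm{od}\,\theta\le\alpha+\beta}h(\theta);$$ and if $1-\alpha$ is odd, then $$\sum_{\substack{\theta\ \mathrm{even}\\ 1-\alpha\le\theta\le1}}h(\theta)+\sum_{\mathrm{ev}\,\beta\le1-\alpha}\ \sum_{\mathrm{ev}\,\theta\le\alpha+\beta}h(\theta)=\sum_{\mathrm{od}\,\beta\le1-\alpha}\ \sum_{\mathrm{ev}\,\theta\le\alpha+\beta}h(\theta),$$ $$\sum_{\substack{\theta\ \mathrm{odd}\\ 1-\alpha\le\theta\le1}}h(\theta)+\sum_{\mathrm{ev}\,\beta\le1-\alpha}\ \sum_{\mathrm{od}\,\theta\le\alpha+\beta}h(\theta)=\sum_{\mathrm{od}\,\beta\le1-\alpha}\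 \sum_{\mathrm{od}\,\theta\le\alpha+\beta}h(\theta).$$
   Context: Inequalities between multiindices in $\mathbb N_0^n$ are componentwise; $|\theta|=\theta_1+\dots+\theta_n$; $0$ and $1$ denote $(0,\dots,0)$ and $(1,\dots,1)$. A multiindex $\theta$ with $0\le\theta\le1$ is even (odd) if $|\theta|$ is even (odd); in particular $0$ is even. $\sum_{\mathrm{ev}\,\theta\le\alpha}$ ($\sum_{\mathrm{od}\,\theta\le\alpha}$) denotes the sum over even (odd) $\theta$ with $\theta\le\alpha$. Empty sums and omitted terms are dropped from an expression (no zero element is assumed); an equality both of whose sides are empty is regarded as trivially true. *)

(* Defs.v *)
From HB Require Import structures.
From mathcomp Require Import all_boot.
Set Implicit Arguments. Unset Strict Implicit. Unset Printing Implicit Defensive.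

Definition A0 (n : nat) := {ffun 'I_n -> 'I_2}.

Definition mle n (a b : A0 n) : bool := [forall i, (a i <= b i)%N].
Definition mle_add n (t a b : A0 n) : bool := [forall i, (t i <= a i + b i)%N].
Definition mabs n (a : A0 n) : nat := \sum_(i < n) (a i : nat).
Definition meven n (a : A0 n) : bool := ~~ odd (mabs a).
Definition modd n (a : A0 n) : bool := odd (mabs a).
Definition one_minus n (a : A0 n) : A0 n := [ffun i => inord (1 - a i)].
(* 1 - alpha + theta  (only used with theta <= alpha, so it lies in A_0) *)
Definition shift n (a t : A0 n) : A0 n := [ffun i => inord (1 - a i + t i)].

(* Sums in an abelian semigroup without zero: adjoin a formal zero None;
   empty sums are None, and nonempty sums are Some of the semigroup sum. *)
Definition oadd (M : Type) (add : M -> M -> M) (x y : option M) : option M :=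
  match x, y with
  | Some a, Some b => Some (add a b)
  | Some a, None => Some a
  | None, y => y
  end.

Definition osum (M : Type) (add : M -> M -> M) n (P : pred (A0 n))
  (F : A0 n -> option M) : option M :=
  \big[oadd add/None]_(t | P t) F t.

(* Main.v *)
Require Import Defs.
From HB Require Import structures.
From mathcomp Require Import all_boot.
Set Implicit Arguments. Unset Strict Implicit.

Lemma ord2 (x : 'I_2) : (x : nat) = 0 \/ (x : nat) = 1.
Proof. by case: x => [[|[|]]] //=; auto. Qed.

Lemma le1 (x : 'I_2) : (x : nat) <= 1.
Proof. by case: (ord2 x) => ->. Qed.

Lemma oneE n (a : A0 n) i : (one_minus a i : nat) = 1 - a i.
Proof. by rewrite ffunE inordK // ltnS leq_subr. Qed.

Definition tog n (i : 'I_n) (b : A0 n) : A0 n :=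
  [ffun j => if j == i then inord (1 - b j) else b j].

Lemma togK n (i : 'I_n) : involutive (tog i).
Proof.
move=> b; apply/ffunP => j; apply: ord_inj; rewrite !ffunE.
case: eqP => [->|] //.
have : (1 - b i) < 2 by rewrite ltnS leq_subr.
move=> H; rewrite inordK ?ltnS ?leq_subr //.
rewrite inordK; last by case: (ord2 (b i)) => ->.
by case: (ord2 (b i)) => ->.
Qed.

Lemma tog_odd n (i : 'I_n) b : modd (tog i b) = ~~ modd b.
Proof.
rewrite /modd /mabs (bigD1 i) //= [in RHS](bigD1 i) //=.
rewrite (eq_bigr (fun j => (b j : nat))); last first.
  by move=> j /negPf Hj; rewrite ffunE Hj.
rewrite ffunE eqxx inordK ?ltnS ?leq_subr // !oddD.
by case: (ord2 (b i)) => H; rewrite H /= ?negbK.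
Qed.


Definition Spred n (a th : A0 n) (q : bool) : pred (A0 n) :=
  [pred b | (modd b == q) && mle b (one_minus a) && mle_add th a b].

Lemma cnt_eq n (a th : A0 n) q : q = modd (one_minus a) ->
  #|Spred a th q| = #|Spred a th (~~ q)| + mle (one_minus a) th.
Proof.
move=> Hq.
case Hle: (mle (one_minus a) th).
  have E : forall b, (mle b (one_minus a) && mle_add th a b) = (b == one_minus a).
    move=> b; apply/idP/eqP.
      case/andP => /forallP H1 /forallP H2.
      move/forallP: Hle => H3.
      apply/ffunP => i; apply: ord_inj.
      move: (H1 i) (H2 i) (H3 i); rewrite !oneE.
      case: (ord2 (a i)) => ->; case: (ord2 (b i)) => ->; case: (ord2 (th i)) => -> //.
    move=> ->; rewrite /mle /mle_add; apply/andP; split; apply/forallP => i //.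
    rewrite oneE; case: (ord2 (a i)) => ->; case: (ord2 (th i)) => -> //.
  rewrite (eq_card (B := pred1 (one_minus a))); last first.
    move=> b; rewrite !inE -andbA E Hq.
    by case: (b =P one_minus a) => [->|]; rewrite ?eqxx ?andbF.
  rewrite (eq_card (A := Spred a th (~~q)) (B := pred0)) ?card0 ?card1 //.
  move=> b; rewrite !inE -andbA E Hq; case: (b =P one_minus a) => [->|]; rewrite ?andbF //.
  by case: (modd _).
move/negbT/forallPn: Hle => [i Hi].
rewrite addn0 (eq_card (A := Spred a th (~~q)) (B := [set b | Spred a th (~~q) b])); last by move=> b; rewrite inE.
rewrite -(card_preimset [set b | Spred a th (~~ q) b] (can_inj (togK i))).
apply: eq_card => b; rewrite !inE /Spred /= tog_odd.
have Ei : (one_minus a i : nat) = 1 /\ (th i : nat) = 0.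
  move: Hi; rewrite oneE.
  by case: (ord2 (a i)) => ->; case: (ord2 (th i)) => ->.
case: Ei => Ei1 Ei2.
congr andb; first congr andb.
- by case: q {Hq}; case: (modd b).
- apply: eq_forallb => j; rewrite [tog i b j]ffunE; case: (j =P i) => [->|] //.
  by rewrite Ei1 inordK ?ltnS ?leq_subr // le1.
- apply: eq_forallb => j; rewrite [tog i b j]ffunE; case: (j =P i) => [->|] //.
  by rewrite Ei2.
Qed.


Section Sec.
Variables (M : Type) (add : M -> M -> M) (addA : associative add) (addC : commutative add).
Lemma oaddA : associative (oadd add).
Proof. by case=> [a|] [b|] [c|] //=; rewrite addA. Qed.
Lemma oaddC : commutative (oadd add).
Proof. by case=> [a|] [b|] //=; rewrite addC. Qed.
Lemma oadd0 : left_id None (oadd add). Proof. by case. Qed.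
HB.instance Definition _ := Monoid.isComLaw.Build (option M) None (oadd add) oaddA oaddC oadd0.

Lemma iter_oadd k x y : iter k (oadd add x) y = oadd add (iter k (oadd add x) None) y.
Proof. by elim: k => //= k ->; rewrite oaddA. Qed.

Variables (n : nat) (h : A0 n -> M) (alpha : A0 n).

Definition parq (q : bool) (b : A0 n) := if q then modd b else meven b.

Definition inner (par : pred (A0 n)) (b : A0 n) :=
  osum add (fun t => par t && mle_add t alpha b) (fun t => Some (h t)).

Lemma Xform par q :
  osum add (fun b => parq q b && mle b (one_minus alpha)) (inner par)
  = \big[oadd add/None]_(t | par t) iter #|Spred alpha t q| (oadd add (Some (h t))) None.
Proof.
rewrite /osum /inner.
rewrite (exchange_big_dep par) /=; last by move=> i j _ /andP[].
apply: eq_bigr => t Ht.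
rewrite -big_const; apply: eq_bigl => b.
rewrite !inE /Spred /= Ht /=; congr (_ && _ && _).
rewrite /parq /meven /modd; case: q; case: (odd (mabs b)) => //.
Qed.

Lemma core par q : q = modd (one_minus alpha) ->
  oadd add (osum add (fun t => par t && mle (one_minus alpha) t) (fun t => Some (h t)))
    (osum add (fun b => parq (~~ q) b && mle b (one_minus alpha)) (inner par))
  = osum add (fun b => parq q b && mle b (one_minus alpha)) (inner par).
Proof.
move=> Hq; rewrite !Xform.
under [RHS]eq_bigr => t _ do rewrite (cnt_eq t Hq) addnC iterD iter_oadd.
rewrite big_split /=; congr oadd.
rewrite /osum big_mkcondr; apply: eq_bigr => t _.
by case: (mle _ _).
Qed.

Definition unshift (t : A0 n) : A0 n := [ffun i => inord (t i - one_minus alpha i)].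

Lemma shiftE (t : A0 n) i : (t i <= alpha i) -> (shift alpha t i : nat) = one_minus alpha i + t i.
Proof.
rewrite ffunE oneE => H; rewrite inordK //.
by move: H; case: (ord2 (alpha i)) => ->; case: (ord2 (t i)) => ->.
Qed.

Lemma reidx p : modd (one_minus alpha) = false ->
 osum add (fun t => parq p t && mle t alpha) (fun t => Some (h (shift alpha t)))
 = osum add (fun t => parq p t && mle (one_minus alpha) t) (fun t => Some (h t)).
Proof.
move=> HB; rewrite /osum [RHS](reindex_onto (shift alpha) unshift); last first.
  move=> j /andP[_ /forallP Hj]; apply/ffunP => i; apply: ord_inj.
  move: (Hj i); rewrite [shift _ _ _]ffunE [unshift _ _]ffunE !oneE => H.
  rewrite (@inordK 1 (j i - _)); last by rewrite ltnS (leq_trans (leq_subr _ _)) ?le1.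
  rewrite subnKC ?inordK ?le1 //.
apply: eq_bigl => t.
case Hle: (mle t alpha); last first.
  move/negbT/forallPn: Hle => [i Hi].
  rewrite andbF; apply/esym/negbTE/negP => /andP[_ /eqP/ffunP/(_ i)/(congr1 val)].
  rewrite /= ffunE inordK; last by rewrite ltnS (leq_trans (leq_subr _ _)) ?le1.
  rewrite oneE; move: Hi; case: (ord2 (alpha i)) => ->; case: (ord2 (t i)) => -> //= _.
  by case: (ord2 (shift alpha t i)) => ->.
have Hs := fun i => shiftE (forallP Hle i).
have -> : unshift (shift alpha t) = t.
  apply/ffunP => i; apply: ord_inj; rewrite ffunE Hs addKn inordK ?le1 //.
rewrite eqxx !andbT.
have -> : mle (one_minus alpha) (shift alpha t).
  by apply/forallP => i; rewrite Hs leq_addr.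
rewrite andbT /parq /meven /modd /mabs.
rewrite [in RHS](eq_bigr (fun i => (one_minus alpha i : nat) + t i)); last by move=> i _; rewrite Hs.
by rewrite big_split /= oddD; move: HB; rewrite /modd /mabs => ->; case: p.
Qed.
End Sec.


Theorem lemma7 (M : Type) (add : M -> M -> M)
  (addA : associative add) (addC : commutative add)
  (n : nat) (h : A0 n -> M) (alpha : A0 n) :
  let one_a := one_minus alpha in
  let S (P : pred (A0 n)) (F : A0 n -> option M) := osum add P F in
  let inner (par : A0 n -> bool) (b : A0 n) :=
    S (fun t => par t && mle_add t alpha b) (fun t => Some (h t)) in
  (meven one_a ->
     oadd add (S (fun t => meven t && mle t alpha) (fun t => Some (h (shift alpha t))))
              (S (fun b => modd b && mle b one_a) (inner (@meven n)))
     = S (fun b => meven b && mle b one_a) (inner (@meven n))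
   /\
     oadd add (S (fun t => modd t && mle t alpha) (fun t => Some (h (shift alpha t))))
              (S (fun b => modd b && mle b one_a) (inner (@modd n)))
     = S (fun b => meven b && mle b one_a) (inner (@modd n)))
  /\
  (modd one_a ->
     oadd add (S (fun t => meven t && mle one_a t) (fun t => Some (h t)))
              (S (fun b => meven b && mle b one_a) (inner (@meven n)))
     = S (fun b => modd b && mle b one_a) (inner (@meven n))
   /\
     oadd add (S (fun t => modd t && mle one_a t) (fun t => Some (h t)))
              (S (fun b => meven b && mle b one_a) (inner (@modd n)))
     = S (fun b => modd b && mle b one_a) (inner (@modd n))).
Proof.
move=> one_a S inner'.
split => HB.
  have HB' : modd one_a = false by move: HB => /negPf.
  have Hq : false = modd one_a by rewrite HB'.
  split.
    apply: (etrans _ (core addA addC h (alpha := alpha) (@meven n) Hq)).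
    by congr oadd; exact: (reidx addA addC h (alpha := alpha) false HB').
  apply: (etrans _ (core addA addC h (alpha := alpha) (@modd n) Hq)).
  by congr oadd; exact: (reidx addA addC h (alpha := alpha) true HB').
have Hq : true = modd one_a by rewrite HB.
split.
  exact: (core addA addC h (alpha := alpha) (@meven n) Hq).
exact: (core addA addC h (alpha := alpha) (@modd n) Hq).
Qed.
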